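(* There exists a $\mathrm{CMSO}[2]$-formula $\mathrm{repr}_{A,B}(a,X)$, over the vocabulary consisting of the unary set predicate $\mathsf{SET}$ and two unary relations $A,B$, with a free first-order variable $a$ and a free monadic variable $X$, such that the following holds. Let $(U,\mathcal{S})$ be a laminar set system with laminar tree $T$, and let $(A,B)$ be a bi-colouring of $L(T)=U$ identifying a set $S$ of inner nodes of $T$. Then, in the structure with universe $U$, $\mathsf{SET}$ interpreted as $\mathcal{S}$ and the unary relations interpreted as $A$ and $B$, the formula $\mathrm{repr}_{A,B}(a,X)$ is satisfied exactly when $X$ is an inner node of $T$ that belongs to $S$ and $a$ is its $A$-representative.
   Context: $\mathrm{CMSO}[2]$ is monadic second-order logic (quantification over elements and over subsets of the universe) extended with a unary set predicate true of a set iff its size is even. A set system is a pair $(U,\mathcal{S})$ with $U$ finite, $\mathcal{S}$ a family of subsets of $U$ with $\emptyset\notin\mathcal{S}$, $U\in\mathcal{S}$, $\{a\}\in\mathcal{S}$ for all $a\in U$; it is laminar if no two members overlap (intersect with neither containing the other). Its laminar tree $T$ is the rooted tree whose nodes are the members of $\mathcal{S}$, root $U$, $X$ a child of $Y$ iff $X\subsetneq Y$ with no member strictly between; leaves are the singletons, identified with elements of $U$ (so a node is the set of leaves below it). Every node is its own ancestor. A bi-colouring is a pair $(A,B)$ of disjoint subsets of $L(T)$ of equal size. A pair $(\pi,\sigma)$ of injections from a set $S$ of inner nodes to $L(T)$ identifies $S$ if each $s\in S$ is the least common ancestor of $\pi(s)$ and $\sigma(s)$; a node $x$ is $s$-requested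 if it lies on the path from $\pi(s)$ to $\sigma(s)$; the pair has unique request if each node is $s$-requested for at most one $s$. $(A,B)$ identifies $S$ if some such pair with unique request has $\pi(S)=A$ and $\sigma(S)=B$; this pair is then unique, and $\pi(s)$ is called the $A$-representative of $s\in S$. *)

(* Defs.v *)
From mathcomp Require Import all_boot.
Set Implicit Arguments. Unset Strict Implicit. Unset Printing Implicit Defensive.

(* First-order variables and monadic (set) variables are both indexed by nat,
   in two separate name spaces. *)
Inductive cmso2 : Type :=
| FEq   : nat -> nat -> cmso2
| FIn   : nat -> nat -> cmso2
| FA    : nat -> cmso2
| FB    : nat -> cmso2
| FSet  : nat -> cmso2
| FEven : nat -> cmso2             (* |X_j| is even  (the CMSO[2] predicate) *)
| FNot  : cmso2 -> cmso2
| FAnd  : cmso2 -> cmso2 -> cmso2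
| FExF  : nat -> cmso2 -> cmso2
| FExS  : nat -> cmso2 -> cmso2.

Definition upd (X : Type) (g : nat -> X) (n : nat) (x : X) : nat -> X :=
  fun m => if m == n then x else g m.

Fixpoint sat (T : finType) (SS : {set {set T}}) (A B : {set T})
    (fa : nat -> T) (sa : nat -> {set T}) (f : cmso2) : Prop :=
  match f with
  | FEq i j => fa i = fa j
  | FIn i j => fa i \in sa j
  | FA i => fa i \in A
  | FB i => fa i \in B
  | FSet j => sa j \in SS
  | FEven j => ~~ odd #|sa j|
  | FNot g => ~ sat SS A B fa sa g
  | FAnd g h => sat SS A B fa sa g /\ sat SS A B fa sa h
  | FExF i g => exists t : T, sat SS A B (upd fa i t) sa g
  | FExS j g => exists X : {set T}, sat SS A B fa (upd sa j X) g
  end.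

Fixpoint fo_free (f : cmso2) (n : nat) : bool :=
  match f with
  | FEq i j => (n == i) || (n == j)
  | FIn i _ => n == i
  | FA i | FB i => n == i
  | FSet _ | FEven _ => false
  | FNot g => fo_free g n
  | FAnd g h => fo_free g n || fo_free h n
  | FExF i g => (n != i) && fo_free g n
  | FExS _ g => fo_free g n
  end.

Fixpoint so_free (f : cmso2) (n : nat) : bool :=
  match f with
  | FEq _ _ | FA _ | FB _ => false
  | FIn _ j => n == j
  | FSet j | FEven j => n == j
  | FNot g => so_free g n
  | FAnd g h => so_free g n || so_free h n
  | FExF _ g => so_free g n
  | FExS j g => (n != j) && so_free g n
  end.

Section Laminar.
Variable T : finType.
Implicit Types (SS Sn : {set {set T}}) (X Y Z : {set T}).

Definition overlap X Y : Prop :=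
  X :&: Y != set0 /\ ~~ (X \subset Y) /\ ~~ (Y \subset X).

Definition laminar_set_system SS : Prop :=
  [/\ set0 \notin SS, [set: T] \in SS, (forall a : T, [set a] \in SS) &
      forall X Y, X \in SS -> Y \in SS -> ~ overlap X Y].

Definition child SS X Y : bool :=
  [&& X \in SS, Y \in SS, X \proper Y &
      [forall Z, ~~ [&& Z \in SS, X \proper Z & Z \proper Y]]].

Definition is_ancestor SS Y X : bool := connect (child SS) X Y.

(* leaves are the singletons, identified with elements of U *)
Definition is_leaf SS X : bool := (X \in SS) && [exists a, X == [set a]].
Definition is_inner SS X : bool := (X \in SS) && ~~ is_leaf SS X.

Definition is_lca SS x (a b : T) : Prop :=
  [/\ x \in SS, is_ancestor SS x [set a], is_ancestor SS x [set b] &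
      forall y, y \in SS -> is_ancestor SS y [set a] -> is_ancestor SS y [set b] ->
        is_ancestor SS y x].

Definition on_path SS x (a b : T) : Prop :=
  x \in SS /\ exists l, [/\ is_lca SS l a b, is_ancestor SS l x &
                           is_ancestor SS x [set a] \/ is_ancestor SS x [set b]].

Definition bicolouring (A B : {set T}) : Prop :=
  [disjoint A & B] /\ #|A| = #|B|.

Definition identifying_pair SS Sn (pi sigma : {set T} -> T) : Prop :=
  [/\ {in Sn &, injective pi}, {in Sn &, injective sigma} &
      forall s, s \in Sn -> is_lca SS s (pi s) (sigma s)].

Definition requested SS (pi sigma : {set T} -> T) x s : Prop :=
  on_path SS x (pi s) (sigma s).

Definition unique_request SS Sn (pi sigma : {set T} -> T) : Prop :=
  forall x s1 s2, s1 \in Sn -> s2 \in Sn ->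
    requested SS pi sigma x s1 -> requested SS pi sigma x s2 -> s1 = s2.

Definition good_pair SS (A B : {set T}) Sn (pi sigma : {set T} -> T) : Prop :=
  [/\ identifying_pair SS Sn pi sigma, unique_request SS Sn pi sigma,
      pi @: Sn = A & sigma @: Sn = B].

Definition bicol_identifies SS (A B : {set T}) Sn : Prop :=
  exists pi sigma, good_pair SS A B Sn pi sigma.

(* a is the A-representative of s (the witnessing pair is unique) *)
Definition A_representative SS (A B : {set T}) Sn s (a : T) : Prop :=
  exists pi sigma, good_pair SS A B Sn pi sigma /\ pi s = a.

End Laminar.

(* Main.v *)
Require Import Defs.
From mathcomp Require Import all_boot.
From mathcomp Require Import zify.
From Stdlib Require Import Classical.
Set Implicit Arguments. Unset Strict Implicit. Unset Printing Implicit Defensive.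

Section Tree.
Variable T : finType.
Variable SS : {set {set T}}.

Lemma anc_sub Y X : is_ancestor SS Y X -> X \subset Y.
Proof.
move/connectP=> [p Hp ->]; elim: p X Hp => [|z p IH] X //=.
move/andP=> [/and4P [_ _ Hxz _] Hp].
exact: subset_trans (proper_sub Hxz) (IH z Hp).
Qed.

Lemma sub_anc_n n X Y : X \in SS -> Y \in SS -> X \subset Y ->
  #|Y| - #|X| <= n -> is_ancestor SS Y X.
Proof.
elim: n X => [|n IH] X HX HY HXY Hn.
  have: X == Y by rewrite eqEcard HXY; lia.
  by move/eqP->; exact: connect0.
case: (boolP (X == Y)) => [/eqP->|HneXY]; first exact: connect0.
have HpY : X \proper Y by rewrite properEneq HneXY.
pose P := fun Z : {set T} => [&& Z \in SS, X \proper Z & Z \subset Y].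
have PY : P Y by rewrite /P HY HpY subxx.
case: (@arg_minnP _ Y P (fun Z : {set T} => #|Z|) PY) => Z /and3P [HZ HXZ HZY] minZ.
apply: (connect_trans (y := Z)).
  apply: connect1; rewrite /child HX HZ HXZ /=.
  apply/forallP => W; apply/negP => /and3P [HW HXW HWZ].
  have := minZ W; rewrite /P HW HXW (subset_trans (proper_sub HWZ) HZY) => /(_ isT).
  have := proper_card HWZ; lia.
apply: IH => //.
have := proper_card HXZ; have := subset_leq_card HZY; lia.
Qed.

Lemma sub_anc X Y : X \in SS -> Y \in SS -> X \subset Y -> is_ancestor SS Y X.
Proof. move=> *; exact: (@sub_anc_n (#|Y| - #|X|)). Qed.

Lemma lam_cmp X Y : laminar_set_system SS -> X \in SS -> Y \in SS ->
  X :&: Y != set0 -> (X \subset Y) || (Y \subset X).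
Proof.
case=> _ _ _ Hlam HX HY Hne.
case: (boolP (X \subset Y)) => //= H1; case: (boolP (Y \subset X)) => // H2.
by case: (Hlam X Y HX HY).
Qed.
End Tree.

Section Good.
Variable T : finType.
Variables (SS : {set {set T}}) (A B : {set T}) (Sn : {set {set T}}).
Variables (pi sigma : {set T} -> T).
Hypothesis Hlam : laminar_set_system SS.
Hypothesis Hbic : bicolouring A B.
Hypothesis Hgood : good_pair SS A B Sn pi sigma.

Lemma Sn_SS s : s \in Sn -> s \in SS.
Proof. by case: Hgood => [[_ _ H] _ _ _] /H []. Qed.

Lemma pi_in s : s \in Sn -> pi s \in s.
Proof.
case: Hgood => [[_ _ H] _ _ _] /H [_ Ha _ _].
by move/anc_sub/subsetP: Ha; apply; rewrite in_set1.
Qed.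

Lemma sigma_in s : s \in Sn -> sigma s \in s.
Proof.
case: Hgood => [[_ _ H] _ _ _] /H [_ _ Ha _].
by move/anc_sub/subsetP: Ha; apply; rewrite in_set1.
Qed.

Lemma single_SS a : [set a] \in SS.
Proof. by case: Hlam. Qed.

Lemma req_self s : s \in Sn -> requested SS pi sigma s s.
Proof.
case: Hgood => [[_ _ H] _ _ _] Hs; have [H1 H2 H3 H4] := H s Hs.
split=> //; exists s; split=> //; first exact: connect0.
by left.
Qed.

Lemma req_strict s Y : s \in Sn -> Y \in SS -> Y \subset s ->
  (pi s \in Y) || (sigma s \in Y) -> requested SS pi sigma Y s.
Proof.
case: Hgood => [[_ _ H] _ _ _] Hs HY HYs Hor; have [H1 H2 H3 H4] := H s Hs.
split=> //; exists s; split=> //; first exact: sub_anc.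
case/orP: Hor => Hin; [left|right]; apply: sub_anc => //;
  try exact: single_SS; by rewrite sub1set.
Qed.

Lemma strict_notSn s Y : s \in Sn -> Y \in Sn -> Y \proper s ->
  (pi s \in Y) || (sigma s \in Y) -> False.
Proof.
move=> Hs HY HYs Hor.
case: Hgood => [_ Hu _ _].
have E := Hu Y s Y Hs HY (req_strict Hs (Sn_SS HY) (proper_sub HYs) Hor) (req_self HY).
by move: HYs; rewrite E properxx.
Qed.

Definition Pset (Y : {set T}) := [set s in Sn | ~~ (s \subset Y) & pi s \in Y].
Definition Qset (Y : {set T}) := [set s in Sn | ~~ (s \subset Y) & sigma s \in Y].
Definition Rset (Y : {set T}) := [set s in Sn | s \subset Y].

Lemma cardAY Y : #|A :&: Y| = #|Rset Y| + #|Pset Y|.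
Proof.
case: Hgood => [[Hpi _ _] _ HA _].
have E : A :&: Y = pi @: (Rset Y :|: Pset Y).
  apply/setP => x; apply/setIP/imsetP.
    rewrite -HA => [[/imsetP [s Hs ->] HY]]; exists s => //.
    rewrite !inE Hs HY /=; by case: (s \subset Y).
  move=> [s]; rewrite !inE => Hs ->; rewrite -HA.
  have Hs' : s \in Sn by case/orP: Hs => /andP [].
  split; first exact: imset_f.
  case/orP: Hs => [/andP [_ HsY]|/and3P [_ _ //]].
  by move/subsetP: HsY; apply; exact: pi_in.
rewrite E card_in_imset; last first.
  by move=> x y; rewrite !inE => /orP [/andP [Hx _]|/andP [Hx _]] /orP [/andP [Hy _]|/andP [Hy _]];
     apply: Hpi.
rewrite cardsU.
suff -> : Rset Y :&: Pset Y = set0 by rewrite cards0 subn0.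
by apply/setP => s; rewrite !inE; case: (s \subset Y); rewrite ?andbF ?andbT ?andbA.
Qed.

Lemma cardBY Y : #|B :&: Y| = #|Rset Y| + #|Qset Y|.
Proof.
case: Hgood => [[_ Hsig _] _ _ HB].
have E : B :&: Y = sigma @: (Rset Y :|: Qset Y).
  apply/setP => x; apply/setIP/imsetP.
    rewrite -HB => [[/imsetP [s Hs ->] HY]]; exists s => //.
    rewrite !inE Hs HY /=; by case: (s \subset Y).
  move=> [s]; rewrite !inE => Hs ->; rewrite -HB.
  have Hs' : s \in Sn by case/orP: Hs => /andP [].
  split; first exact: imset_f.
  case/orP: Hs => [/andP [_ HsY]|/and3P [_ _ //]].
  by move/subsetP: HsY; apply; exact: sigma_in.
rewrite E card_in_imset; last first.
  by move=> x y; rewrite !inE => /orP [/andP [Hx _]|/andP [Hx _]] /orP [/andP [Hy _]|/andP [Hy _]];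
     apply: Hsig.
rewrite cardsU.
suff -> : Rset Y :&: Qset Y = set0 by rewrite cards0 subn0.
by apply/setP => s; rewrite !inE; case: (s \subset Y); rewrite ?andbF ?andbT ?andbA.
Qed.

Lemma PQ_prop s Y : Y \in SS -> s \in Pset Y :|: Qset Y ->
  [/\ s \in Sn, Y \proper s & (pi s \in Y) || (sigma s \in Y)].
Proof.
move=> HY; rewrite !inE => Hs.
have [Hs' HnsY Hor] : [/\ s \in Sn, ~~ (s \subset Y) & (pi s \in Y) || (sigma s \in Y)].
  by case/orP: Hs => /and3P [-> -> ->]; rewrite ?orbT.
split=> //.
have Hne : s :&: Y != set0.
  apply/set0Pn; case/orP: Hor => H; [exists (pi s)|exists (sigma s)];
  by rewrite inE H ?pi_in ?sigma_in.
have := lam_cmp Hlam (Sn_SS Hs') HY Hne; rewrite (negbTE HnsY) /= => HYs.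
by rewrite properE HYs.
Qed.

Lemma PQ_disj Y : Y \in SS -> Pset Y :&: Qset Y = set0.
Proof.
move=> HY; apply/setP => s; rewrite !inE.
apply/negP => /andP [/and3P [Hs HnsY Hp] /and3P [_ _ Hq]].
case: Hgood => [[_ _ H] _ _ _]; have [_ _ _ H4] := H s Hs.
have : is_ancestor SS Y s.
  by apply: H4 => //; apply: sub_anc => //; rewrite ?single_SS ?sub1set.
by move/anc_sub; rewrite (negbTE HnsY).
Qed.

Lemma PQ_le1 Y : Y \in SS -> #|Pset Y :|: Qset Y| <= 1.
Proof.
move=> HY; apply/card_le1_eqP => s1 s2 H1 H2.
have [Hs1 P1 O1] := PQ_prop HY H1; have [Hs2 P2 O2] := PQ_prop HY H2.
case: Hgood => [_ Hu _ _].
symmetry; exact: (Hu Y s1 s2 Hs1 Hs2 (req_strict Hs1 HY (proper_sub P1) O1)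
                           (req_strict Hs2 HY (proper_sub P2) O2)).
Qed.

Lemma parity Y : Y \in SS ->
  odd #|(A :|: B) :&: Y| = (Pset Y :|: Qset Y != set0).
Proof.
move=> HY.
have E1 : #|(A :|: B) :&: Y| = #|A :&: Y| + #|B :&: Y|.
  rewrite setIUl cardsU.
  suff -> : A :&: Y :&: (B :&: Y) = set0 by rewrite cards0 subn0.
  case: Hbic => /disjoint_setI0 HAB _.
  by rewrite setIACA setIid HAB set0I.
have E2 : #|Pset Y :|: Qset Y| = #|Pset Y| + #|Qset Y|.
  by rewrite cardsU PQ_disj // cards0 subn0.
rewrite E1 cardAY cardBY.
have -> : #|Rset Y| + #|Pset Y| + (#|Rset Y| + #|Qset Y|) = (#|Pset Y :|: Qset Y|) + #|Rset Y| * 2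
  by rewrite E2; lia.
rewrite oddD oddM /= andbF addbF -cards_eq0.
have := PQ_le1 HY; case: #|_| => [|[|]] //.
Qed.

Lemma parity_odd s Y : Y \in SS -> s \in Sn -> Y \proper s ->
  (pi s \in Y) || (sigma s \in Y) -> odd #|(A :|: B) :&: Y|.
Proof.
move=> HY Hs HYs Hor; rewrite parity //; apply/set0Pn; exists s.
have HnsY : ~~ (s \subset Y) by move: HYs; rewrite properE => /andP [].
by rewrite !inE Hs HnsY; case/orP: Hor => ->; rewrite ?orbT.
Qed.

Lemma parity_ex Y : Y \in SS -> odd #|(A :|: B) :&: Y| ->
  exists s, [/\ s \in Sn, Y \proper s & (pi s \in Y) || (sigma s \in Y)].
Proof.
move=> HY; rewrite parity // => /set0Pn [s Hs]; exists s; exact: PQ_prop.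
Qed.
End Good.

Definition FOr p q := FNot (FAnd (FNot p) (FNot q)).
Definition FImp p q := FNot (FAnd p (FNot q)).
Definition FAllF i p := FNot (FExF i (FNot p)).
Definition FAllS j p := FNot (FExS j (FNot p)).
Definition FIff p q := FAnd (FImp p q) (FImp q p).
Definition evenAB j := FExS 1 (FAnd (FAllF 1 (FIff (FIn 1 1) (FAnd (FIn 1 j) (FOr (FA 1) (FB 1))))) (FEven 1)).
Definition properF Y X := FAnd (FAllF 1 (FImp (FIn 1 Y) (FIn 1 X))) (FExF 1 (FAnd (FIn 1 X) (FNot (FIn 1 Y)))).
Definition phi0 := FAnd (FSet 0) (FAnd (FExF 1 (FAnd (FIn 1 0) (FNot (FEq 1 0))))
  (FAnd (FA 0) (FAnd (FIn 0 0) (FAnd (evenAB 0)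
   (FAllS 2 (FImp (FAnd (FSet 2) (FAnd (FIn 0 2) (properF 2 0))) (FNot (evenAB 2)))))))).

Section Sem.
Variable T : finType.
Variables (SS : {set {set T}}) (A B : {set T}).
Notation sat := (sat SS A B).

Lemma sat_exS fa sa j p : sat fa sa (FExS j p) <-> exists X, sat fa (upd sa j X) p.
Proof. by []. Qed.
Lemma sat_exF fa sa i p : sat fa sa (FExF i p) <-> exists t, sat (upd fa i t) sa p.
Proof. by []. Qed.
Lemma sat_and fa sa p q : sat fa sa (FAnd p q) <-> sat fa sa p /\ sat fa sa q.
Proof. by []. Qed.
Lemma sat_not fa sa p : sat fa sa (FNot p) <-> ~ sat fa sa p.
Proof. by []. Qed.

Lemma sat_or fa sa p q : sat fa sa (FOr p q) <-> sat fa sa p \/ sat fa sa q.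
Proof. simpl; split; [by move=> H; apply: NNPP => H'; apply: H; split => ?; apply: H'; auto | tauto]. Qed.

Lemma sat_imp fa sa p q : sat fa sa (FImp p q) <-> (sat fa sa p -> sat fa sa q).
Proof. simpl; split; [by move=> H Hp; apply: NNPP => Hq; apply: H | tauto]. Qed.

Lemma sat_allF fa sa i p : sat fa sa (FAllF i p) <-> forall t, sat (upd fa i t) sa p.
Proof. simpl; split; [by move=> H t; apply: NNPP => Hn; apply: H; exists t | by move=> H [t Ht]; apply: Ht]. Qed.

Lemma sat_allS fa sa j p : sat fa sa (FAllS j p) <-> forall X, sat fa (upd sa j X) p.
Proof. simpl; split; [by move=> H t; apply: NNPP => Hn; apply: H; exists t | by move=> H [t Ht]; apply: Ht]. Qed.

Lemma sat_iff fa sa p q : sat fa sa (FIff p q) <-> (sat fa sa p <-> sat fa sa q).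
Proof. move: (sat_imp fa sa p q) (sat_imp fa sa q p) => /= H1 H2; simpl; tauto. Qed.

Lemma sat_evenAB fa sa j : j != 1 -> sat fa sa (evenAB j) <-> ~~ odd #|(A :|: B) :&: sa j|.
Proof.
move=> Hj; rewrite /evenAB; split.
  move/sat_exS => [Z /sat_and [/sat_allF HZ HE]]; move: HE; rewrite /= /upd /= => HE.
  suff -> : (A :|: B) :&: sa j = Z by [].
  apply/setP => t; have := HZ t; rewrite sat_iff.
  move: (sat_or (upd fa 1 t) (upd sa 1 Z) (FA 1) (FB 1)).
  rewrite /= /upd /= (negbTE Hj) !inE.
  case: (t \in Z); case: (t \in sa j); case: (t \in A); case: (t \in B) => /=; intuition.
move=> H; apply/sat_exS; exists ((A :|: B) :&: sa j); apply/sat_and; split; last by rewrite /= /upd /=.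
apply/sat_allF => t; apply/sat_iff.
move: (sat_or (upd fa 1 t) (upd sa 1 ((A :|: B) :&: sa j)) (FA 1) (FB 1)).
rewrite /= /upd /= (negbTE Hj) !inE.
case: (t \in sa j); case: (t \in A); case: (t \in B) => /=; intuition.
Qed.

Lemma sat_properF fa sa Y X : sat fa sa (properF Y X) <-> sa Y \proper sa X.
Proof.
split.
  move=> /sat_and [/sat_allF H /sat_exF [t]]; rewrite /= /upd /= => [[Ht Hn]]; apply/properP; split.
    by apply/subsetP => x Hx; have := H x; rewrite sat_imp /= /upd /=; apply.
  by exists t => //; apply/negP.
move/properP => [/subsetP H [t Ht Hn]]; apply/sat_and; split.
  by apply/sat_allF => x; apply/sat_imp; rewrite /= /upd /=; apply: H.
by apply/sat_exF; exists t; rewrite /= /upd /=; split => //; apply/negP.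
Qed.

Lemma sat_phi0 fa sa : sat fa sa phi0 <->
  [/\ sa 0 \in SS, (exists b, b \in sa 0 /\ b <> fa 0), fa 0 \in A /\ fa 0 \in sa 0,
      ~~ odd #|(A :|: B) :&: sa 0| &
      forall Y, Y \in SS -> fa 0 \in Y -> Y \proper sa 0 -> odd #|(A :|: B) :&: Y| ].
Proof.
have E : forall Y, sat fa (upd sa 2 Y)
   (FImp (FAnd (FSet 2) (FAnd (FIn 0 2) (properF 2 0))) (FNot (evenAB 2))) <->
   (Y \in SS -> fa 0 \in Y -> Y \proper sa 0 -> odd #|(A :|: B) :&: Y|).
  move=> Y; have U0 : upd sa 2 Y 0 = sa 0 by [].
  have U2 : upd sa 2 Y 2 = Y by [].
  have H1 := sat_properF fa (upd sa 2 Y) 2 0; rewrite U0 U2 in H1.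
  have H2 := sat_evenAB fa (upd sa 2 Y) (j:=2) isT; rewrite U2 in H2.
  rewrite sat_imp; split.
    move=> H HY Ha Hp.
    have H3 : sat fa (upd sa 2 Y) (FNot (evenAB 2)).
      apply: H; apply/sat_and; split; first exact HY.
      by apply/sat_and; split; [exact Ha | apply/H1].
    by apply/negPn/negP => Hn; apply: H3; apply/H2.
  move=> H /sat_and [HY /sat_and [Ha /H1 Hp]] /H2 Hn.
  by have := H HY Ha Hp; rewrite (negbTE Hn).
rewrite /phi0; split.
  move=> /sat_and [H1 /sat_and [/sat_exF [b Hb'] /sat_and [H3 /sat_and [H4 /sat_and [/sat_evenAB H5 /sat_allS H6]]]]].
  move: Hb'; rewrite /= /upd /= => [[Hb Hb2]].
  split=> //; first by exists b.
    by apply: H5.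
  by move=> Y; apply/E.
move=> [H1 [b [Hb Hb2]] [H3 H4] H5 H6].
apply/sat_and; split=> //; apply/sat_and; split.
  by apply/sat_exF; exists b; rewrite /= /upd /=.
apply/sat_and; split=> //; apply/sat_and; split=> //; apply/sat_and; split.
  by apply/sat_evenAB.
by apply/sat_allS => Y; apply/E; apply: H6.
Qed.
End Sem.

Theorem lemma3p11 :
  exists phi : cmso2,
    (forall n, fo_free phi n -> n = 0) /\ (forall n, so_free phi n -> n = 0) /\
    forall (T : finType) (SS : {set {set T}}) (A B : {set T}) (Sn : {set {set T}}),
      laminar_set_system SS ->
      bicolouring A B ->
      (forall s, s \in Sn -> is_inner SS s) ->
      bicol_identifies SS A B Sn ->
      forall (fa : nat -> T) (sa : nat -> {set T}),
        sat SS A B fa sa phi <->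
        [/\ is_inner SS (sa 0), sa 0 \in Sn & A_representative SS A B Sn (sa 0) (fa 0)].
Proof.
exists phi0; split; first by case=> [|[|[|n]]].
split; first by case=> [|[|[|n]]].
move=> T SS A B Sn Hlam Hbic Hinn [pi [sigma Hg]] fa sa.
apply: (iff_trans (sat_phi0 _ _ _ _ _)); split.
  move=> [HX [b [Hb Hba]] [Ha HaX] Hev Hodd].
  have Ha' : fa 0 \in pi @: Sn by case: (Hg) => [_ _ -> _].
  case/imsetP: Ha' => s' Hs' Ea.
  have Hs'SS := Sn_SS Hg Hs'.
  have Has' : fa 0 \in s' by rewrite Ea (pi_in Hg Hs').
  have Hne : s' :&: sa 0 != set0 by apply/set0Pn; exists (fa 0); rewrite inE Has' HaX.
  suff E : s' = sa 0.
    rewrite -E; split=> //; first exact: Hinn.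
    by exists pi, sigma; split; last rewrite Ea.
  case/orP: (lam_cmp Hlam Hs'SS HX Hne) => Hsub; case: (boolP (s' == sa 0)) => [/eqP //|Hneq].
    have Hp : s' \proper sa 0 by rewrite properEneq Hneq.
    have [s [Hs Hps Hor]] := parity_ex Hlam Hbic Hg Hs'SS (Hodd s' Hs'SS Has' Hp).
    by case: (strict_notSn Hlam Hg Hs Hs' Hps Hor).
  have Hp : sa 0 \proper s' by rewrite properEneq eq_sym Hneq.
  have := parity_odd Hlam Hbic Hg HX Hs' Hp; rewrite -Ea HaX => /(_ isT).
  by rewrite (negbTE Hev).
move=> [Hin HXSn [pi' [sigma' [Hg' Ea]]]].
have HX := Sn_SS Hg' HXSn.
case: (Hg') => [_ _ HA HB].
have HpA : pi' (sa 0) \in A by rewrite -HA imset_f.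
have HsB : sigma' (sa 0) \in B by rewrite -HB imset_f.
split=> //.
- exists (sigma' (sa 0)); split; first exact: (sigma_in Hg' HXSn).
  rewrite -Ea => E; case: Hbic => /disjoint_setI0 HAB _.
  have : pi' (sa 0) \in A :&: B by rewrite inE HpA -E HsB.
  by rewrite HAB inE.
- by rewrite -Ea; split=> //; exact: (pi_in Hg' HXSn).
- apply/negP => Hodd.
  have [s [Hs Hps Hor]] := parity_ex Hlam Hbic Hg' HX Hodd.
  by case: (strict_notSn Hlam Hg' Hs HXSn Hps Hor).
- move=> Y HY HaY HYX.
  by apply: (parity_odd Hlam Hbic Hg' HY HXSn HYX); rewrite Ea HaY.
Qed.
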